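(* Let $k\ge 2$ and $\ell\ge 2$ be integers, and let $H(x)=B_{k+1}(\ell x+1)-B_{k+1}(x+1)\in\mathbb{Q}[x]$. Then $H(x)$ has at least three distinct complex roots.
   Context: $B_q(x)=\sum_{i=0}^{q}\binom{q}{i}B_i x^{q-i}$ denotes the $q$-th Bernoulli polynomial, where $B_i$ are the Bernoulli numbers with $B_0=1$, $B_1=-1/2$, $B_2=1/6$, $\dots$. For every integer $m\ge 1$ one has $H(m)=(k+1)\sum_{j=m+1}^{\ell m} j^k$. *)

(* Defs.v *)
From HB Require Import structures.
From mathcomp Require Import all_boot all_order all_algebra all_field.
Set Implicit Arguments. Unset Strict Implicit. Unset Printing Implicit Defensive.
Import Order.TTheory GRing.Theory Num.Theory.
Local Open Scope ring_scope.

(* bern_seq n = [:: B_0; ...; B_n], Bernoulli numbers with B_1 = -1/2,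
   via B_0 = 1 and B_n = -1/(n+1) * \sum_{i<n} C(n+1,i) B_i. *)
Fixpoint bern_seq (n : nat) : seq rat :=
  match n with
  | 0%N => [:: 1]
  | n'.+1 => let s := bern_seq n' in
      rcons s (- (n'.+2%:R)^-1 *
               \sum_(i < n'.+1) ('C(n'.+2, i))%:R * nth 0 s i)
  end.

Definition bernoulli (n : nat) : rat := nth 0 (bern_seq n) n.

Definition bernoulli_poly (q : nat) : {poly rat} :=
  \sum_(i < q.+1) (('C(q, i))%:R * bernoulli i) *: 'X^(q - i).

Definition Hpoly (k l : nat) : {poly rat} :=
  (bernoulli_poly k.+1) \Po (l%:R *: 'X + 1) - (bernoulli_poly k.+1) \Po ('X + 1).

(* Main.v *)
Require Import Defs.
From HB Require Import structures.
From mathcomp Require Import all_boot all_order all_algebra all_field.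
From mathcomp Require Import ring lra zify.
Import GRing.Theory Num.Theory.
Local Open Scope ring_scope.

Lemma coef_lin_exp (R : comNzRingType) (a : R) d m :
  ((a *: 'X + 1) ^+ d)`_m = a ^+ m *+ 'C(d, m).
Proof.
rewrite addrC exprDn.
have -> : \sum_(i < d.+1) (1 ^+ (d - i) * (a *: 'X) ^+ i) *+ 'C(d, i)
   = \poly_(i < d.+1) (a ^+ i *+ 'C(d, i)) :> {poly R}.
  rewrite poly_def; apply: eq_bigr => i _.
  by rewrite expr1n mul1r exprZn scalerMnl.
rewrite coef_poly; case: ltnP => // H.
by rewrite bin_small.
Qed.

Definition Fp (n l : nat) : {poly rat} :=
  bernoulli_poly n \Po (l%:R *: 'X + 1) - bernoulli_poly n.

Lemma HF k l : Hpoly k l = Fp k.+1 l \Po ('X + 1).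
Proof. by []. Qed.

Lemma Fcoef n l m :
  (Fp n l)`_m = \sum_(i < n.+1) ('C(n, i))%:R * bernoulli i *
       ((l%:R ^+ m) * ('C(n - i, m))%:R - ((n - i == m)%N)%:R).
Proof.
rewrite /Fp coefB /bernoulli_poly linear_sum /= !coef_sum -sumrB.
apply: eq_bigr => i _.
rewrite linearZ /= rmorphXn /= comp_polyX !coefZ coef_lin_exp coefXn.
rewrite mulrBr eq_sym; congr (_ - _); by rewrite mulr_natr.
Qed.
Lemma size_bern n : size (bern_seq n) = n.+1.
Proof. by elim: n => //= n IH; rewrite size_rcons IH. Qed.

Lemma bern_nth n i : (i <= n)%N -> nth 0 (bern_seq n) i = bernoulli i.
Proof.
elim: n => [|n IH]; first by rewrite leqn0 => /eqP->.
rewrite leq_eqVlt => /orP[/eqP->//|]; rewrite ltnS => lein.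
by rewrite /= nth_rcons size_bern ltnS lein IH.
Qed.

Lemma bern_rec n :
  \sum_(i < n.+2) ('C(n.+2, i))%:R * bernoulli i = 0 :> rat.
Proof.
rewrite big_ord_recr /= binSn.
have -> : bernoulli n.+1 = - (n.+2%:R)^-1 *
     \sum_(i < n.+1) ('C(n.+2, i))%:R * bernoulli i.
  rewrite /bernoulli /= nth_rcons size_bern ltnn eqxx; congr (_ * _).
  apply: eq_bigr => i _; rewrite bern_nth //.
  by rewrite -ltnS.
rewrite mulNr mulrN mulrA mulrV ?mul1r ?addrN //.
by rewrite unitfE pnatr_eq0.
Qed.

Lemma bern0 : bernoulli 0 = 1. Proof. by []. Qed.
Lemma bern1 : bernoulli 1 = - 2^-1. Proof. apply/eqP; rewrite /bernoulli /= !big_ord_recr !big_ord0 /=; vm_compute; reflexivity. Qed.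
Lemma bern2 : bernoulli 2 = 6^-1. Proof. apply/eqP; rewrite /bernoulli /= !big_ord_recr !big_ord0 /=; vm_compute; reflexivity. Qed.
Lemma bern3 : bernoulli 3 = 0. Proof. apply/eqP; rewrite /bernoulli /= !big_ord_recr !big_ord0 /=; vm_compute; reflexivity. Qed.

Definition term n l j i : rat := ('C(n, i))%:R * bernoulli i *
       ((l%:R ^+ j) * ('C(n - i, j))%:R - ((n - i == j)%N)%:R).

Lemma peel4 m l j : (m <= j)%N ->
  (Fp m.+3 l)`_j = term m.+3 l j 0 + term m.+3 l j 1 + term m.+3 l j 2 + term m.+3 l j 3.
Proof.
move=> mj; rewrite Fcoef.
do 4 rewrite big_ord_recl.
rewrite big1 ?addr0 ?addrA //.
move=> i _ /=.
rewrite /bump /= (@bin_small (m.+3 - _)); last by have := ltn_ord i; lia.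
have -> : ((m.+3 - (1 + (1 + (1 + (1 + i)))))%N == j) = false.
  by apply/eqP; have := ltn_ord i; lia.
by rewrite mulr0 subrr mulr0.
Qed.

Lemma Fzero m l j : (m.+3 < j)%N -> (Fp m.+3 l)`_j = 0.
Proof.
move=> hj; rewrite Fcoef big1 // => i _.
rewrite (@bin_small (m.+3 - _)); last by have := ltn_ord i; lia.
have -> : ((m.+3 - i)%N == j) = false by apply/eqP; have := ltn_ord i; lia.
by rewrite mulr0 subrr mulr0.
Qed.

Lemma F0 m l : (Fp m.+3 l)`_0 = 0.
Proof.
rewrite Fcoef big_ord_recr /= subnn /= bin0 expr0 !mul1r subrr mulr0 addr0.
rewrite -[RHS](bern_rec m.+1); apply: eq_bigr => i _.
by rewrite bin0 mul1r subn_eq0 leqNgt ltn_ord /= subr0 mulr1.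
Qed.

Ltac simp_terms := rewrite /term /= ?subSS ?subn0 ?bern0 ?bern1 ?bern2 ?bern3 ?bin0 ?bin1 ?binn ?eqxx;
  repeat match goal with |- context[(?a == ?b)%N] =>
    rewrite (_ : (a == b) = false); last by apply/eqP; lia end.

Lemma Ftop m l : (Fp m.+3 l)`_m.+3 = l%:R ^+ m.+3 - 1.
Proof.
rewrite peel4; last lia; simp_terms.
rewrite (@bin_small m.+2) // (@bin_small m.+1); last lia. rewrite (@bin_small m); last lia.
rewrite /=; ring.
Qed.


Lemma b2 n : ('C(n.+2, 2) * 2 = n.+2 * n.+1)%N.
Proof. by rewrite mulnC (mul_bin_left n.+2 1) bin1 subn1 /= mulnC. Qed.
Lemma b3 n : ('C(n.+3, 3) * 6 = n.+3 * n.+2 * n.+1)%N.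
Proof.
have h := mul_bin_left n.+3 2; rewrite subSS /= in h.
have h2 := b2 n.+1.
nia.
Qed.
Lemma s2 n : 'C(n.+3, n.+1) = 'C(n.+3, 2).
Proof. by rewrite -(@bin_sub n.+3 2) // !subSS subn0. Qed.
Lemma s3 n : 'C(n.+3, n) = 'C(n.+3, 3).
Proof. by rewrite -(@bin_sub n.+3 3) // !subSS subn0. Qed.
Lemma s2' n : 'C(n.+2, n) = 'C(n.+2, 2).
Proof. by rewrite -(@bin_sub n.+2 2) // !subSS subn0. Qed.

Lemma F1 m l : (Fp m.+3 l)`_m.+2 = m.+3%:R / 2 * (l%:R ^+ m.+2 + 1).
Proof.
rewrite peel4; last lia; simp_terms.
rewrite binSn (@bin_small m.+1) // (@bin_small m); last lia.
by rewrite /=; field.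
Qed.

Lemma F2 m l : (Fp m.+3 l)`_m.+1 = 'C(m.+3, 2)%:R / 6 * (l%:R ^+ m.+1 - 1).
Proof.
rewrite peel4; last lia; simp_terms.
rewrite binSn (@bin_small m) // s2.
have h : ('C(m.+3, 2))%:R = (m.+3%:R * m.+2%:R) / 2 :> rat.
  by rewrite -natrM -(b2 m.+1) natrM mulfK.
by rewrite h /=; field.
Qed.

Lemma F3 m l : (Fp m.+3 l)`_m = 0.
Proof.
rewrite peel4; last lia; simp_terms.
rewrite binSn s3 s2'.
have h : ('C(m.+3, 2))%:R = (m.+3%:R * m.+2%:R) / 2 :> rat.
  by rewrite -natrM -(b2 m.+1) natrM mulfK.
have h' : ('C(m.+2, 2))%:R = (m.+2%:R * m.+1%:R) / 2 :> rat.
  by rewrite -natrM -(b2 m) natrM mulfK.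
have h3 : ('C(m.+3, 3))%:R = (m.+3%:R * m.+2%:R * m.+1%:R) / 6 :> rat.
  by rewrite -!natrM -(b3 m) natrM mulfK.
by rewrite h h' h3 /=; field.
Qed.

Lemma coef_XsubC_exp (R : comNzRingType) (v : R) b j :
  (('X - v%:P) ^+ b)`_j = (- v) ^+ (b - j) *+ 'C(b, j).
Proof.
rewrite -polyCN addrC exprDn.
have -> : \sum_(i < b.+1) (((- v)%:P) ^+ (b - i) * 'X ^+ i) *+ 'C(b, i)
   = \poly_(i < b.+1) ((- v) ^+ (b - i) *+ 'C(b, i)) :> {poly R}.
  rewrite poly_def; apply: eq_bigr => i _.
  by rewrite -rmorphXn mul_polyC scalerMnl.
rewrite coef_poly; case: ltnP => // H.
by rewrite bin_small.
Qed.

Lemma prod_form (F : fieldType) (v : F) r :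
  all (fun z => (z == 0) || (z == v)) r ->
  \prod_(z <- r) ('X - z%:P) = 'X^(count_mem 0 r) * ('X - v%:P) ^+ (count (predC1 0) r).
Proof.
elim: r => [|x r IH]; first by rewrite big_nil /= mulr1.
rewrite /= => /andP[hx /IH {}IH]; rewrite big_cons IH.
have [->|x0] := eqVneq x 0.
  by rewrite polyC0 subr0 /= add1n add0n exprS mulrA.
rewrite (negbTE x0) /= in hx; rewrite (eqP hx) /= add0n add1n exprS; ring.
Qed.

Lemma nat_contra m l u : (2 <= l)%N -> u = (l ^ m.+1)%N ->
  ((m + 3) * ((l * u + 1) * (l * u + 1)) * 3 + (m + 2) * (l * l * u + u) * 4 <>
   (m + 2) * (l * l * (u * u) + 1) * 4)%N.
Proof.
move=> hl hu E.
have u1 : (1 <= u)%N by rewrite hu expn_gt0; lia.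
case: m hu E => [|[|p]] hu E.
- nia.
- nia.
have E2 : (p.+1 + u * (p.+1 * l ^ 2 * u) =
           u * (6 * (p + 5) * l + 4 * p.+4 * l ^ 2 + 4 * p.+4))%N by nia.
have : (u %| p.+1)%N.
  by rewrite -(@dvdn_addl (u * (p.+1 * l ^ 2 * u)) u p.+1 (dvdn_mulr _ (dvdnn u))) E2 dvdn_mulr.
move/dvdn_leq => /(_ isT).
have : (p.+3 < u)%N.
  apply: (leq_trans (ltn_expl p.+3 (isT : 1 < 2)%N)).
  by rewrite hu leq_exp2r.
lia.
Qed.

Lemma rat_contra m l : (2 <= l)%N ->
  ((Fp m.+3 l)`_m.+2) ^+ 2 != 4 * (Fp m.+3 l)`_m.+3 * (Fp m.+3 l)`_m.+1.
Proof.
move=> hl; apply/eqP => E.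
have h : ('C(m.+3, 2))%:R = (m.+3%:R * m.+2%:R) / 2 :> rat.
  by rewrite -natrM -(b2 m.+1) natrM mulfK.
rewrite Ftop F1 F2 h in E.
apply: (@nat_contra m l _ hl erefl).
apply/eqP; rewrite -(eqr_nat rat) !(natrD, natrM, natrX).
have e3 : (m.+3%:R : rat) = m%:R + 3 by rewrite -[m.+3]addn3 natrD.
have e2 : (m.+2%:R : rat) = m%:R + 2 by rewrite -[m.+2]addn2 natrD.
rewrite e3 e2 in E.
set L := (l%:R : rat) in E *.
set M := (m%:R : rat) in E *.
rewrite !exprS !expr0 !mulr1 in E *.
set T := L ^+ m in E *.
apply/eqP/subr0_eq.
have m3 : M + 3%:R != 0.
  by rewrite /M -natrD pnatr_eq0 addn3.
transitivity (12 / (M + 3%:R) * (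
   (M + 3) / 2 * (L * (L * T) + 1) * ((M + 3) / 2 * (L * (L * T) + 1))
   - 4 * (L * (L * (L * T)) - 1) * ((M + 3) * (M + 2) / 2 / 6 * (L * T - 1)))).
  by field.
by rewrite E subrr mulr0.
Qed.

Lemma powne1 l n : (2 <= l)%N -> (l%:R : rat) ^+ n.+1 - 1 != 0.
Proof.
move=> hl; rewrite subr_eq0 -natrX pnatr_eq1 -(exp1n n.+1) eqn_exp2r //; lia.
Qed.

Lemma aux_id (R : comNzRingType) (c v : R) :
  (c * (- v *+ 2)) ^+ 2 = 4 * (c * 1) * (c * ((- v) ^+ 2 *+ 1)).
Proof. ring. Qed.

Lemma mainF m l : (2 <= l)%N ->
  exists z1 z2 z3 : algC,
    [/\ z1 != z2, z1 != z3, z2 != z3 &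
     [/\ root (map_poly ratr (Fp m.+3 l)) z1,
         root (map_poly ratr (Fp m.+3 l)) z2 &
         root (map_poly ratr (Fp m.+3 l)) z3]].
Proof.
move=> hl.
set P := map_poly (ratr : rat -> algC) (Fp m.+3 l).
have cP j : P`_j = ratr (Fp m.+3 l)`_j by rewrite coef_map.
have Ltop : (Fp m.+3 l)`_m.+3 != 0 by rewrite Ftop powne1.
have L2 : (Fp m.+3 l)`_m.+1 != 0.
  rewrite F2 mulf_neq0 ?powne1 // mulf_neq0 // ?pnatr_eq0 -?lt0n ?bin_gt0 //.
have L1 : (Fp m.+3 l)`_m.+2 != 0.
  rewrite F1; apply: lt0r_neq0; apply: mulr_gt0.
    by apply: divr_gt0; rewrite ltr0n.
  have := exprn_ge0 m.+2 (ler0n rat l); lra.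
have Pn0 : P != 0.
  have : (ratr ((Fp m.+3 l)`_m.+3) : algC) != 0 by rewrite fmorph_eq0.
  by rewrite -cP; apply: contraNneq => ->; rewrite coef0.
have [r Dp] := closed_field_poly_normal P.
set c := lead_coef P in Dp.
have c0 : c != 0 by rewrite lead_coef_eq0.
have rootr z : root P z = (z \in r) by rewrite Dp rootZ // root_prod_XsubC.
have zr : (0 : algC) \in r.
  by rewrite -rootr rootE horner_coef0 cP F0 rmorph0.
have key : forall v, all (fun z => (z == 0) || (z == v)) r -> False.
  move=> v /prod_form PF.
  set a := count_mem 0 r in PF; set b := count (predC1 0) r in PF.
  have Pc j : P`_j = c * (if (j < a)%N then 0 else (- v) ^+ (b - (j - a)) *+ 'C(b, j - a)).
    by rewrite Dp PF coefZ coefXnM coef_XsubC_exp.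
  have nz j : (Fp m.+3 l)`_j != 0 -> P`_j != 0 by rewrite cP fmorph_eq0.
  have hle : (a + b <= m.+3)%N.
    rewrite leqNgt; apply/negP => lt.
    have := cP (a + b); rewrite Fzero // rmorph0 Pc ltnNge leq_addr /= addKn subnn expr0 binn mulr1.
    by move=> /eqP; rewrite (negbTE c0).
  have hge : (m.+3 <= a + b)%N.
    rewrite leqNgt; apply/negP => lt.
    have : P`_m.+3 = 0.
      rewrite Pc; case: ifP => _; first by rewrite mulr0.
      rewrite bin_small ?mulr0n ?mulr0 //; lia.
    by move/eqP; apply/negP; apply: nz.
  have b2 : (2 <= b)%N.
    rewrite leqNgt; apply/negP => lt.
    have : P`_m.+1 = 0.
      rewrite Pc; case: ifP => [_|/negbT]; first by rewrite mulr0.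
      rewrite -leqNgt => ?; lia.
    by move/eqP; apply/negP; apply: nz.
  have b3 : (b <= 2)%N.
    rewrite leqNgt; apply/negP => lt.
    have v0 : v = 0.
      have := cP m; rewrite F3 rmorph0 Pc.
      have -> : (m < a)%N = false by apply/negbTE; rewrite -leqNgt; lia.
      have -> : (b - (m - a) = 3)%N by lia.
      move=> /eqP; rewrite mulf_eq0 (negbTE c0) /= mulrn_eq0 expf_eq0 oppr_eq0 /=.
      have -> : (m - a = b - 3)%N by lia.
      by rewrite eqn0Ngt bin_gt0 leq_subr /= => /eqP.
    have : P`_m.+2 = 0.
      rewrite Pc; case: ifP => _; first by rewrite mulr0.
      have -> : (b - (m.+2 - a) = 1)%N by lia.
      by rewrite v0 oppr0 expr1 mul0rn mulr0.
    by move/eqP; apply/negP; apply: nz.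
  have hb : b = 2%N by lia.
  have ha : a = m.+1 by lia.
  have E3 := cP m.+3; have E2 := cP m.+2; have E1 := cP m.+1.
  rewrite !Pc hb ha !ltnn /= in E3 E2 E1.
  have f1 : (m.+3 < m.+1)%N = false by lia.
  have f2 : (m.+2 < m.+1)%N = false by lia.
  have f3 : (m.+3 - m.+1 = 2)%N by lia.
  have f4 : (m.+2 - m.+1 = 1)%N by lia.
  rewrite f1 f3 subnn in E3; rewrite f2 f4 in E2; rewrite subnn in E1.
  apply: (negP (@rat_contra m l hl)); apply/eqP.
  apply: (fmorph_inj (ratr : rat -> algC)).
  rewrite rmorphXn !rmorphM /= -E3 -E2 -E1 rmorph_nat.
  rewrite /= !bin0 !binn /= ?subn0 ?subnn ?expr0 ?expr1.
  rewrite (_ : 'C(2, 1) = 2%N) //; exact: aux_id.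
case hv: (has (predC1 0) r); last first.
  exfalso; apply: (key 0); apply/allP => z zr'.
  by move/negbT/hasPn: hv => /(_ z zr') /=; rewrite negbK => ->.
move/hasP: hv => [v vr /= v0].
case hw: (has (fun z => (z != 0) && (z != v)) r); last first.
  exfalso; apply: (key v); apply/allP => z zr'.
  by move/negbT/hasPn: hw => /(_ z zr'); rewrite negb_and !negbK.
move/hasP: hw => [w wr /andP[w0 wv]].
exists 0, v, w; split; rewrite 1?eq_sym //.
by split; rewrite rootr.
Qed.

Theorem mainTheorem2 (k l : nat) (hk : (2 <= k)%N) (hl : (2 <= l)%N) :
  exists z1 z2 z3 : algC,
    [/\ z1 != z2, z1 != z3, z2 != z3 &
     [/\ root (map_poly ratr (Hpoly k l)) z1,
         root (map_poly ratr (Hpoly k l)) z2 &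
         root (map_poly ratr (Hpoly k l)) z3]].
Proof.
case: k hk => [|[|m]] // _.
have [z1 [z2 [z3 [d12 d13 d23 [r1 r2 r3]]]]] := @mainF m l hl.
have rt z : root (map_poly (ratr : rat -> algC) (Fp m.+3 l)) z ->
            root (map_poly (ratr : rat -> algC) (Hpoly m.+2 l)) (z - 1).
  rewrite HF map_comp_poly !rootE horner_comp.
  have -> : (map_poly (ratr : rat -> algC) ('X + 1)).[z - 1] = z.
    by rewrite map_polyXaddC hornerD hornerX hornerC rmorph1 subrK.
  by [].
exists (z1 - 1), (z2 - 1), (z3 - 1).
by rewrite !(inj_eq (addIr _)) d12 d13 d23 !rt.
Qed.
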